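(* Let $A$ and $B$ be commutative groups. (a) If $B$ is trivial, then $\mathcal D(A,B)=\{-\infty\}$. (b) If $A$ is trivial and $B$ is nontrivial, then $\mathcal D(A,B)=\{-\infty,0\}$. (c) If $A$ and $B$ are both nontrivial, then $\mathcal D(A,B)\setminus\{\infty\}=\{n\in\{-\infty\}\cup\mathbb N: n\le\delta^\circ(A,B)\}$.
   Context: For commutative groups $A,B$, $B^A$ denotes the commutative group (under pointwise addition) of all maps $A\to B$. For $a\in A$, the difference operator $\Delta_a:B^A\to B^A$ is $(\Delta_a f)(x)=f(x+a)-f(x)$. Let $\widetilde{\mathbb N}=\mathbb N\cup\{-\infty,\infty\}$ ($\mathbb N=\{0,1,2,\dots\}$), totally ordered with $-\infty$ least and $\infty$ greatest. The functional degree $\operatorname{fdeg}(f)\in\widetilde{\mathbb N}$ of $f\in B^A$ is: $-\infty$ if $f=0$; otherwise the least $n\in\mathbb N$ such that $\Delta_{a_1}\cdots\Delta_{a_{n+1}}f=0$ for all $a_1,\dots,a_{n+1}\in A$; and $\infty$ if no such $n$ exists. $\mathcal D(A,B)=\{\operatorname{fdeg}(f):f\in B^A\}$, and $\delta^\circ(A,B)=\sup\{\operatorname{fdeg}(f): f\in B^A,\ \operatorname{fdeg}(f)<\infty\}$ (supremum in $\widetilde{\mathbb N}$). *)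

(* Defs.v *)
From Stdlib Require Import ClassicalEpsilon.
From mathcomp Require Import all_boot all_order all_algebra.
Set Implicit Arguments. Unset Strict Implicit. Unset Printing Implicit Defensive.
Import GRing.Theory.
Local Open Scope ring_scope.

Inductive enat := NegInf | Fin of nat | PosInf.

Definition enat_le (x y : enat) : Prop :=
  match x, y with
  | NegInf, _ => True
  | _, PosInf => True
  | Fin m, Fin n => (m <= n)%N
  | _, _ => False
  end.

Definition Delta (A B : zmodType) (a : A) (f : A -> B) : A -> B :=
  fun x => f (x + a) - f x.

Definition iterDelta (A B : zmodType) (s : seq A) (f : A -> B) : A -> B :=
  foldr (@Delta A B) f s.

Definition vanishes (A B : zmodType) (f : A -> B) (n : nat) : Prop :=
  forall s : seq A, size s = n.+1 -> forall x, iterDelta s f x = 0.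

Definition is_fdeg (A B : zmodType) (f : A -> B) (d : enat) : Prop :=
  match d with
  | NegInf => forall x, f x = 0
  | Fin n => (exists x, f x <> 0) /\ vanishes f n /\
             (forall m, vanishes f m -> (n <= m)%N)
  | PosInf => (exists x, f x <> 0) /\ (forall n, ~ vanishes f n)
  end.

Definition fdeg (A B : zmodType) (f : A -> B) : enat :=
  epsilon (inhabits NegInf) (is_fdeg f).

Definition Dset (A B : zmodType) (d : enat) : Prop :=
  exists f : A -> B, fdeg f = d.

Definition is_sup (S : enat -> Prop) (s : enat) : Prop :=
  (forall x, S x -> enat_le x s) /\
  (forall u, (forall x, S x -> enat_le x u) -> enat_le s u).

Definition delta0 (A B : zmodType) : enat :=
  epsilon (inhabits NegInf)
    (is_sup (fun d => exists f : A -> B, fdeg f = d /\ d <> PosInf)).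

Definition trivial_group (G : zmodType) : Prop := forall x : G, x = 0.

(* Main.v *)
Require Import Defs.
From mathcomp Require Import all_boot all_order all_algebra.
From Stdlib Require Import Classical ClassicalEpsilon.
From mathcomp Require Import zify.
Set Implicit Arguments. Unset Strict Implicit. Unset Printing Implicit Defensive.
Import GRing.Theory.
Local Open Scope ring_scope.

Lemma min_ex (P : nat -> Prop) n : P n -> exists k, P k /\ forall m, P m -> (k <= m)%N.
Proof.
elim/ltn_ind: n => n IH Pn.
case: (classic (exists m, (m < n)%N /\ P m)) => [[m [lt Pm]]|no].
  exact: IH lt Pm.
exists n; split=> // m Pm; case: (leqP n m) => // lt; exfalso; apply: no; by exists m.
Qed.

Lemma iterDelta0 (A B : zmodType) (h : A -> B) :
  (forall x, h x = 0) -> forall s x, iterDelta s h x = 0.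
Proof.
move=> H; elim=> [|a s IH] x /=; first exact: H.
by rewrite /Delta !IH subr0.
Qed.

Lemma vanishesS (A B : zmodType) (h : A -> B) m : vanishes h m -> vanishes h m.+1.
Proof.
move=> H [|a s] //= [] Hs x.
by rewrite /Delta !H // subrr.
Qed.

Lemma vanishes_le (A B : zmodType) (h : A -> B) m k :
  vanishes h m -> (m <= k)%N -> vanishes h k.
Proof.
move=> H; elim: k => [|k IH]; first by rewrite leqn0 => /eqP <-.
rewrite leq_eqVlt => /orP [/eqP <- //|lt].
exact: vanishesS (IH lt).
Qed.

Lemma fdeg_uniq (A B : zmodType) (f : A -> B) d d' :
  is_fdeg f d -> is_fdeg f d' -> d = d'.
Proof.
case: d => [|n|]; case: d' => [|n'|] //=.
- move=> H [[x Hx] _]; by case: (Hx (H x)).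
- move=> H [[x Hx] _]; by case: (Hx (H x)).
- move=> [[x Hx] _] H; by case: (Hx (H x)).
- move=> [_ [V1 M1]] [_ [V2 M2]]; congr Fin; apply/eqP; rewrite eqn_leq.
  by rewrite (M1 _ V2) (M2 _ V1).
- move=> [_ [V _]] [_ N]; by case: (N n).
- move=> [[x Hx] _] H; by case: (Hx (H x)).
- move=> [_ N] [_ [V _]]; by case: (N n').
Qed.

Lemma fdeg_exists (A B : zmodType) (f : A -> B) : exists d, is_fdeg f d.
Proof.
case: (classic (forall x, f x = 0)) => [H|H]; first by exists NegInf.
have [x Hx] := not_all_ex_not _ _ H.
case: (classic (exists n, vanishes f n)) => [[n Vn]|N].
  have [k [Vk Mk]] := min_ex Vn.
  exists (Fin k); split; [by exists x|by split].
exists PosInf; split; first by exists x.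
by move=> n Vn; apply: N; exists n.
Qed.

Lemma fdeg_spec (A B : zmodType) (f : A -> B) : is_fdeg f (fdeg f).
Proof. rewrite /fdeg; apply: epsilon_spec; exact: fdeg_exists. Qed.

Lemma fdeg_eq (A B : zmodType) (f : A -> B) d : is_fdeg f d -> fdeg f = d.
Proof. move=> H; exact: fdeg_uniq (fdeg_spec f) H. Qed.

Lemma fdeg_zero (A B : zmodType) : fdeg (fun _ : A => (0 : B)) = NegInf.
Proof. by apply: fdeg_eq. Qed.

Lemma fdeg_char (A B : zmodType) (h : A -> B) n :
  (exists s, size s = n /\ exists x, iterDelta s h x <> 0) -> vanishes h n ->
  fdeg h = Fin n.
Proof.
move=> [s [Hs [x Hx]]] V; apply: fdeg_eq; split; last split=> //.
  apply: NNPP => N; apply: Hx; apply: iterDelta0 => y.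
  apply: NNPP => Hy; apply: N; by exists y.
move=> m Vm; case: (leqP n m) => // lt.
move: Hs lt; case: n V => // n V Hs lt.
have Vn := vanishes_le Vm (lt : (m <= n)%N).
by case: Hx; apply: Vn.
Qed.

Lemma fdeg_witness (A B : zmodType) (f : A -> B) m :
  is_fdeg f (Fin m) -> exists s, size s = m /\ exists x, iterDelta s f x <> 0.
Proof.
move=> [[x Hx] [V M]]; case: m V M => [|m] V M.
  by exists [::]; split=> //; exists x.
apply: NNPP => N.
have : (m.+1 <= m)%N; last by rewrite ltnn.
apply: M => s Hs y; apply: NNPP => Hy; apply: N; exists s; split=> //; by exists y.
Qed.

Lemma down (A B : zmodType) (f : A -> B) m n :
  fdeg f = Fin m -> (n <= m)%N -> exists g : A -> B, fdeg g = Fin n.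
Proof.
move=> E le; have Hf := fdeg_spec f; rewrite E in Hf.
have [s [Hs [x Hx]]] := fdeg_witness Hf.
have [_ [V _]] := Hf.
exists (iterDelta (drop n s) f); apply: fdeg_char.
  exists (take n s); split; first by rewrite size_take Hs; case: ltnP => //; lia.
  exists x; by rewrite /iterDelta -foldr_cat cat_take_drop.
move=> w Hw y; rewrite /iterDelta -foldr_cat; apply: V.
rewrite size_cat size_drop Hw Hs; lia.
Qed.

Lemma sup_exists (S : enat -> Prop) : exists s, is_sup S s.
Proof.
case: (classic (exists m, forall x, S x -> enat_le x (Fin m))) => [[m Hm]|N].
  case: (classic (forall x, S x -> x = NegInf)) => [H|H].
    exists NegInf; split=> [x Sx|u _]; first by rewrite (H x Sx).
    done.
  have [x Hx] := not_all_ex_not _ _ H.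
  have [Sx nx] := imply_to_and _ _ Hx.
  have [k [Bk Mk]] := @min_ex (fun m => forall x, S x -> enat_le x (Fin m)) m Hm.
  exists (Fin k); split=> // u Hu.
  case: u Hu => [|j|] Hu //=.
    by move: (Hu x Sx) nx; case: x {Hx Sx}.
  apply: Mk => y Sy; move: (Hu y Sy); by case: y {Sy}.
exists PosInf; split=> [x _|u Hu]; first by case: x.
case: u Hu => [|j|] Hu //; exfalso; apply: N.
  exists 0%N => x Sx; move: (Hu x Sx); by case: x {Sx}.
by exists j.
Qed.

Lemma enat_le_trans x y z : enat_le x y -> enat_le y z -> enat_le x z.
Proof.
by case: x => [|a|]; case: y => [|b|]; case: z => [|c|] //= H1 H2; exact: leq_trans H1 H2.
Qed.

Theorem lemma2 (A B : zmodType) :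
  (trivial_group B -> forall d, Dset A B d <-> d = NegInf) /\
  (trivial_group A -> ~ trivial_group B ->
     forall d, Dset A B d <-> (d = NegInf \/ d = Fin 0)) /\
  (~ trivial_group A -> ~ trivial_group B ->
     forall d, (Dset A B d /\ d <> PosInf) <->
               ((d = NegInf \/ exists n, d = Fin n) /\ enat_le d (delta0 A B))).
Proof.
split; [|split].
- move=> HB d; split=> [[f <-]|->]; last by exists (fun _ => 0); exact: fdeg_zero.
  have := fdeg_spec f; case: (fdeg f) => //= [n|] [[x Hx] _]; by case: (Hx (HB _)).
- move=> HA HB d.
  have V0 : forall f : A -> B, vanishes f 0.
    move=> f [|a [|b s]] // _ x /=; by rewrite /Delta (HA (x + a)) (HA x) subrr.
  split=> [[f <-]|[->|->]].
  + have := fdeg_spec f; case: (fdeg f) => [|n|] /=; [by left| |].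
      by move=> [_ [_ M]]; right; have := M 0%N (V0 f); rewrite leqn0 => /eqP ->.
    by move=> [_ N]; case: (N 0%N).
  + by exists (fun _ => 0); exact: fdeg_zero.
  + have [b Hb] := not_all_ex_not _ _ HB.
    exists (fun _ => b); apply: fdeg_eq; split; first by exists 0.
    by split=> //; exact: V0.
- move=> _ _ d.
  set S := (fun d => exists f : A -> B, fdeg f = d /\ d <> PosInf).
  have Hsup : is_sup S (delta0 A B).
    rewrite /delta0; apply: epsilon_spec; exact: sup_exists.
  split=> [[[f Ef] nP]|[Hd le]].
    split; first by case: d Ef nP => [|n|] // _ _; [left|right; exists n].
    apply: Hsup.1; by exists f.
  case: Hd => [->|[n En]].
    by split=> //; exists (fun _ => 0); exact: fdeg_zero.
  subst d.
  have [f [m [Ef le']]] : exists f : A -> B, exists m, fdeg f = Fin m /\ (n <= m)%N.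
    apply: NNPP => N.
    have : enat_le (delta0 A B) (if n is n'.+1 then Fin n' else NegInf).
      apply: Hsup.2 => x [f [Ef nP]].
      case: x Ef nP => [|m|] Ef nP //.
      case: (leqP n m) => lt; first by case: N; exists f, m.
      by case: n {le N} lt => //.
    move=> H; have := enat_le_trans le H; case: n {le N H} => //= n; by rewrite ltnn.
  have [g Eg] := down Ef le'.
  by split=> //; exists g.
Qed.
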